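(* Let $N_1,N_2,\chi>0$, $\alpha=\pi(\sqrt{N_2/\pi}+N_1/2)^2$, $\beta=\alpha/\sqrt{\pi N_2}$, $\tau=\sqrt{\pi N_2}N_1$, $\rho=1+N_2/\tau$, and let $S(\phi)=\frac{\phi}{\tau}\ln\frac{\alpha\phi}{\tau}+\frac{\phi}{N_1}\ln\frac{\beta\phi}{\tau}+(1-\rho\phi)\ln(1-\rho\phi)$, $H(\phi)=\chi\phi(1-\rho\phi)$, $\kappa(\phi)=\frac{1}{36\phi(1-\phi)}$. For grid functions $\phi\in\mathcal{C}_{\rm per}$ with $0<\phi_{i,j}<1/\rho$ for all $i,j$, define $F(\phi)=h^2\sum_{i,j=1}^N\big(S(\phi_{i,j})+H(\phi_{i,j})+\kappa(\phi_{i,j})(a_x((D_x\phi)^2)_{i,j}+a_y((D_y\phi)^2)_{i,j})\big)$, $F_S(\phi)=h^2\sum_{i,j}S(\phi_{i,j})$, $F_H(\phi)=F_e(\phi)=-h^2\sum_{i,j}H(\phi_{i,j})$, $F_{K_1}(\phi)=h^2\sum_{i,j}(\kappa(\phi_{i,j})-\tfrac1{36})(a_x((D_x\phi)^2)_{i,j}+a_y((D_y\phi)^2)_{i,j})$, $F_{K_2}(\phi)=\frac{1}{36}\|\nabla_h\phi\|_2^2$, and $F_c=F_S+F_{K_1}+F_{K_2}$. Then $$F(\phi)=F_c(\phi)-F_e(\phi)=F_S(\phi)+F_{K_1}(\phi)+F_{K_2}(\phi)-F_H(\phi),$$ and each of $F_c,F_e,F_S,F_{K_1},F_{K_2},F_H$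 is convex (on the convex set of grid functions with values in $(0,1/\rho)$).
   Context: Let $\Omega=(0,L)^2$, $N\in\mathbb{N}$, $h=L/N$. $\mathcal{C}_{\rm per}$ is the space of real grid functions $\nu_{i,j}$, $i,j\in\mathbb{Z}$, that are $N$-periodic in each index (values at cell centers $((i-\frac12)h,(j-\frac12)h)$). For $\nu\in\mathcal{C}_{\rm per}$ define on edges $D_x\nu_{i+1/2,j}=(\nu_{i+1,j}-\nu_{i,j})/h$, $D_y\nu_{i,j+1/2}=(\nu_{i,j+1}-\nu_{i,j})/h$, $A_x\nu_{i+1/2,j}=(\nu_{i+1,j}+\nu_{i,j})/2$ (similarly $A_y$); for edge functions $f$ define $a_xf_{i,j}=(f_{i+1/2,j}+f_{i-1/2,j})/2$, $d_xf_{i,j}=(f_{i+1/2,j}-f_{i-1/2,j})/h$ (similarly $a_y,d_y$). $\|\nabla_h\nu\|_2^2=h^2\sum_{i,j=1}^N\big(a_x((D_x\nu)^2)_{i,j}+a_y((D_y\nu)^2)_{i,j}\big)$. *)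

(* Defs.v *)
From HB Require Import structures.
From mathcomp Require Import all_boot all_order all_algebra.
From mathcomp Require Import all_classical all_reals all_analysis.
Set Implicit Arguments. Unset Strict Implicit. Unset Printing Implicit Defensive.
Import Order.TTheory GRing.Theory Num.Theory.
Local Open Scope ring_scope.

Section Defs.
Variable R : realType.

(* Grid (cell-centered) functions: nu i j = nu_{i,j}, i j : int.
   Edge functions: f i j = f_{i+1/2, j} (for x-edges), resp. f_{i, j+1/2}. *)
Definition grid := int -> int -> R.

Definition Cper (N : nat) (nu : grid) : Prop :=
  forall i j, nu (i + N%:Z)%R j = nu i j /\ nu i (j + N%:Z)%R = nu i j.

Definition Dx (h : R) (nu : grid) : grid := fun i j => (nu (i + 1)%R j - nu i j) / h.
Definition Dy (h : R) (nu : grid) : grid := fun i j => (nu i (j + 1)%R - nu i j) / h.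
Definition ax (f : grid) : grid := fun i j => (f i j + f (i - 1)%R j) / 2.
Definition ay (f : grid) : grid := fun i j => (f i j + f i (j - 1)%R) / 2.

Definition sq (f : grid) : grid := fun i j => f i j ^+ 2.

Definition gradsq (h : R) (nu : grid) : grid :=
  fun i j => ax (sq (Dx h nu)) i j + ay (sq (Dy h nu)) i j.

Definition gsum (N : nat) (h : R) (g : grid) : R :=
  h ^+ 2 * \sum_(1 <= i < N.+1) \sum_(1 <= j < N.+1) g i%:Z j%:Z.

Definition gradnorm2 (N : nat) (h : R) (nu : grid) : R := gsum N h (gradsq h nu).

Definition alpha (N1 N2 : R) : R := pi * (Num.sqrt (N2 / pi) + N1 / 2) ^+ 2.
Definition beta (N1 N2 : R) : R := alpha N1 N2 / Num.sqrt (pi * N2).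
Definition tau (N1 N2 : R) : R := Num.sqrt (pi * N2) * N1.
Definition rho (N1 N2 : R) : R := 1 + N2 / tau N1 N2.

Definition Sfun (N1 N2 : R) (p : R) : R :=
  p / tau N1 N2 * ln (alpha N1 N2 * p / tau N1 N2)
  + p / N1 * ln (beta N1 N2 * p / tau N1 N2)
  + (1 - rho N1 N2 * p) * ln (1 - rho N1 N2 * p).
Definition Hfun (N1 N2 chi : R) (p : R) : R := chi * p * (1 - rho N1 N2 * p).
Definition kappa (p : R) : R := 1 / (36 * p * (1 - p)).

Definition Fen (N1 N2 chi : R) (N : nat) (h : R) (phi : grid) : R :=
  gsum N h (fun i j => Sfun N1 N2 (phi i j) + Hfun N1 N2 chi (phi i j)
                       + kappa (phi i j) * gradsq h phi i j).
Definition FS (N1 N2 : R) (N : nat) (h : R) (phi : grid) : R :=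
  gsum N h (fun i j => Sfun N1 N2 (phi i j)).
Definition FH (N1 N2 chi : R) (N : nat) (h : R) (phi : grid) : R :=
  - gsum N h (fun i j => Hfun N1 N2 chi (phi i j)).
Definition Fe (N1 N2 chi : R) (N : nat) (h : R) (phi : grid) : R :=
  - gsum N h (fun i j => Hfun N1 N2 chi (phi i j)).
Definition FK1 (N : nat) (h : R) (phi : grid) : R :=
  gsum N h (fun i j => (kappa (phi i j) - 1 / 36) * gradsq h phi i j).
Definition FK2 (N : nat) (h : R) (phi : grid) : R := 1 / 36 * gradnorm2 N h phi.
Definition Fc (N1 N2 : R) (N : nat) (h : R) (phi : grid) : R :=
  FS N1 N2 N h phi + FK1 N h phi + FK2 N h phi.

Definition admissible (N1 N2 : R) (N : nat) (phi : grid) : Prop :=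
  Cper N phi /\ forall i j, 0 < phi i j < 1 / rho N1 N2.

Definition convex_on (D : grid -> Prop) (E : grid -> R) : Prop :=
  forall (phi psi : grid) (t : R), D phi -> D psi -> 0 <= t <= 1 ->
    E (fun i j => t * phi i j + (1 - t) * psi i j) <= t * E phi + (1 - t) * E psi.

End Defs.

(* Main.v *)
Require Import Defs.
From HB Require Import structures.
From mathcomp Require Import all_boot all_order all_algebra.
From mathcomp Require Import all_classical all_reals all_analysis.
Import Order.TTheory GRing.Theory Num.Theory.
From mathcomp Require Import ring lra.
Local Open Scope ring_scope.

Section Aux.
Variable R : realType.
Implicit Types a b c k m t x : R.

Lemma ln_le_sub1 {x} : 0 < x -> ln x <= x - 1.
Proof.
move=> x0; have := @le_ln1Dx R (x - 1).
by rewrite addrCA subrr addr0; apply; lra.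
Qed.

Lemma xln_core {c a m} : 0 < c -> 0 < a -> 0 < m ->
  a * ln (c * m) + a - m <= a * ln (c * a).
Proof.
move=> c0 a0 m0.
have pc : c \is Num.pos by rewrite posrE.
have pa : a \is Num.pos by rewrite posrE.
have pm : m \is Num.pos by rewrite posrE.
rewrite !lnM //.
have H := ln_le_sub1 (divr_gt0 m0 a0).
rewrite ln_div // in H.
have := ler_wpM2l (ltW a0) H.
have -> : a * (m / a - 1) = m - a by field; rewrite lt0r_neq0.
rewrite mulrBr => H2.
rewrite !mulrDr; lra.
Qed.

Definition xl k c x := k * x * ln (c * x).

Lemma xl_convex k c a b t : 0 <= k -> 0 < c -> 0 < a -> 0 < b -> 0 <= t <= 1 ->
  xl k c (t * a + (1 - t) * b) <= t * xl k c a + (1 - t) * xl k c b.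
Proof.
move=> k0 c0 a0 b0 /andP[t0 t1].
have m0 : 0 < t * a + (1 - t) * b.
  case: (eqVneq t 0) => [->|tn0]; first by lra.
  have : 0 < t * a by apply: mulr_gt0 => //; rewrite lt_neqAle eq_sym tn0.
  have : 0 <= (1 - t) * b by apply: mulr_ge0; lra.
  lra.
move: m0; set m := t * a + (1 - t) * b => m0.
have A := xln_core c0 a0 m0.
have B := xln_core c0 b0 m0.
have A' := ler_wpM2l t0 A.
have B' : (1 - t) * (b * ln (c * m) + b - m) <= (1 - t) * (b * ln (c * b)).
  by apply: ler_wpM2l => //; lra.
have C : m * ln (c * m) <= t * (a * ln (c * a)) + (1 - t) * (b * ln (c * b)).
  have -> : m * ln (c * m) = t * (a * ln (c * m) + a - m) + (1 - t) * (b * ln (c * m) + b - m).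
    by rewrite /m; ring.
  exact: lerD.
rewrite /xl.
have := ler_wpM2l k0 C.
have -> : k * (t * (a * ln (c * a)) + (1 - t) * (b * ln (c * b))) = t * (k * a * ln (c * a)) + (1 - t) * (k * b * ln (c * b)) by ring.
by rewrite -[k * m * _]mulrA.
Qed.

End Aux.
Arguments xl {R}.
Section Aux2.
Variable R : realType.

Definition qq (x : R) := 1 - x + x ^+ 2.

Lemma comb_pos {u v t : R} : 0 < u -> 0 < v -> 0 <= t <= 1 -> 0 < t * u + (1 - t) * v.
Proof.
move=> u0 v0 /andP[t0 t1].
case: (eqVneq t 0) => [->|tn0]; first by lra.
have : 0 < t * u by apply: mulr_gt0 => //; rewrite lt_neqAle eq_sym tn0.
have : 0 <= (1 - t) * v by apply: mulr_ge0; lra.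
lra.
Qed.

Lemma comb_01 {u v t : R} : 0 < u < 1 -> 0 < v < 1 -> 0 <= t <= 1 -> 0 < t * u + (1 - t) * v < 1.
Proof.
move=> /andP[u0 u1] /andP[v0 v1] ht.
have h1 := comb_pos u0 v0 ht.
have h2 : 0 < 1 - u by lra.
have h3 : 0 < 1 - v by lra.
have h4 := comb_pos h2 h3 ht.
apply/andP; split => //; lra.
Qed.

Lemma qq_gt0 x : 0 < qq x.
Proof. rewrite /qq; have := sqr_ge0 (x - 1/2); nra. Qed.

Lemma tangent {a m : R} : 0 < a < 1 -> 0 < m < 1 ->
  1 / qq a <= 1 / qq m + (1 - 2 * m) / (qq m) ^+ 2 * (a - m).
Proof.
move=> /andP[a0 a1] /andP[m0 m1].
have qa := qq_gt0 a; have qm := qq_gt0 m.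
rewrite -subr_ge0.
have -> : 1 / qq m + (1 - 2 * m) / qq m ^+ 2 * (a - m) - 1 / qq a =
  ((a - m) ^+ 2 * (2 * m * (1 - m) + a * (1 - a) + (a - m) ^+ 2)) / (qq a * qq m ^+ 2).
  rewrite /qq in qa qm *; field.
  by rewrite !lt0r_neq0.
apply: divr_ge0; last by apply: mulr_ge0; [lra | apply: sqr_ge0].
apply: mulr_ge0; first exact: sqr_ge0.
have := sqr_ge0 (a - m); nra.
Qed.

Lemma Pconc {a b t : R} : 0 < a < 1 -> 0 < b < 1 -> 0 <= t <= 1 ->
  t * (1 / qq a) + (1 - t) * (1 / qq b) <= 1 / qq (t * a + (1 - t) * b).
Proof.
move=> ha hb ht.
have hm := comb_01 ha hb ht.
move: ht => /andP[t0 t1].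
move: (tangent ha hm) (tangent hb hm).
set m := t * a + (1 - t) * b.
set D := (1 - 2 * m) / qq m ^+ 2.
move=> T1 T2.
have T1' := ler_wpM2l t0 T1.
have T2' : (1 - t) * (1 / qq b) <= (1 - t) * (1 / qq m + D * (b - m)).
  by apply: ler_wpM2l => //; lra.
have := lerD T1' T2'.
have -> : t * (1 / qq m + D * (a - m)) + (1 - t) * (1 / qq m + D * (b - m)) = 1 / qq m.
  by rewrite /m; ring.
done.
Qed.

Definition ww (x : R) := 36 * (1 / qq x - 1).
Definition GG (x : R) := kappa x - 1 / 36.

Lemma ww_gt0 {x : R} : 0 < x < 1 -> 0 < ww x.
Proof.
move=> /andP[x0 x1]; rewrite /ww; apply: mulr_gt0; first lra.
have q0 := qq_gt0 x.
rewrite subr_gt0 ltr_pdivlMr // mul1r /qq; nra.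
Qed.

Lemma GGww {x : R} : 0 < x < 1 -> GG x * ww x = 1.
Proof.
move=> /andP[x0 x1]; have q0 := qq_gt0 x.
rewrite /GG /ww /kappa; rewrite /qq in q0 *.
field.
by rewrite !lt0r_neq0 //; lra.
Qed.

Lemma persp {w1 w2 wm g1 g2 gm t : R} (z1 z2 : R) : 0 < w1 -> 0 < w2 ->
  g1 * w1 = 1 -> g2 * w2 = 1 -> gm * wm = 1 ->
  t * w1 + (1 - t) * w2 <= wm -> 0 <= t <= 1 ->
  gm * (t * z1 + (1 - t) * z2) ^+ 2 <= t * (g1 * z1 ^+ 2) + (1 - t) * (g2 * z2 ^+ 2).
Proof.
move=> w10 w20 e1 e2 em hW /andP[t0 t1].
have W0 : 0 < t * w1 + (1 - t) * w2 by apply: comb_pos => //; apply/andP.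
move: W0 hW; set W := t * w1 + (1 - t) * w2 => W0 hW.
have wm0 : 0 < wm by lra.
have gmE : gm = wm^-1 by rewrite -[gm]mulr1 -(mulfV (lt0r_neq0 wm0)) mulrA em mul1r.
have g1E : g1 = w1^-1 by rewrite -[g1]mulr1 -(mulfV (lt0r_neq0 w10)) mulrA e1 mul1r.
have g2E : g2 = w2^-1 by rewrite -[g2]mulr1 -(mulfV (lt0r_neq0 w20)) mulrA e2 mul1r.
have S1 : gm * (t * z1 + (1 - t) * z2) ^+ 2 <= (t * z1 + (1 - t) * z2) ^+ 2 / W.
  rewrite gmE mulrC; apply: ler_wpM2l; first exact: sqr_ge0.
  by rewrite lef_pV2 ?posrE.
apply: le_trans S1 _.
rewrite ler_pdivrMr // g1E g2E.
set y1 := z1 / w1; set y2 := z2 / w2.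
have -> : z1 = w1 * y1 by rewrite /y1; field; rewrite lt0r_neq0.
have -> : z2 = w2 * y2 by rewrite /y2; field; rewrite lt0r_neq0.
have -> : w1^-1 * (w1 * y1) ^+ 2 = w1 * y1 ^+ 2 by field; rewrite lt0r_neq0.
have -> : w2^-1 * (w2 * y2) ^+ 2 = w2 * y2 ^+ 2 by field; rewrite lt0r_neq0.
have h : 0 <= t * (1 - t) * w1 * w2 * (y1 - y2) ^+ 2.
  apply: mulr_ge0; last exact: sqr_ge0.
  apply: mulr_ge0; last lra.
  apply: mulr_ge0; last lra.
  apply: mulr_ge0; lra.
rewrite /W; lra.
Qed.

Lemma keyG (x1 x2 t z1 z2 : R) : 0 < x1 < 1 -> 0 < x2 < 1 -> 0 <= t <= 1 ->
  GG (t * x1 + (1 - t) * x2) * (t * z1 + (1 - t) * z2) ^+ 2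
  <= t * (GG x1 * z1 ^+ 2) + (1 - t) * (GG x2 * z2 ^+ 2).
Proof.
move=> h1 h2 ht.
have hm := comb_01 h1 h2 ht.
have hc := Pconc h1 h2 ht.
apply: (persp _ _ (ww_gt0 h1) (ww_gt0 h2) (GGww h1) (GGww h2) (GGww hm) _ ht).
move: hc; rewrite /ww; lra.
Qed.

End Aux2.
Section Main.
Variable R : realType.

Lemma gsum_ext (N : nat) (h : R) (f g : grid R) : (forall i j, f i j = g i j) -> gsum N h f = gsum N h g.
Proof. by move=> e; rewrite /gsum; congr (_ * _); apply: eq_bigr => i _; apply: eq_bigr => j _. Qed.

Lemma gsumD (N : nat) (h : R) (f g : grid R) :
  gsum N h (fun i j => f i j + g i j) = gsum N h f + gsum N h g.
Proof.
rewrite /gsum -mulrDr; congr (_ * _); rewrite -big_split; apply: eq_bigr => i _.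
by rewrite -big_split.
Qed.

Lemma gsumZ (N : nat) (h k : R) (f : grid R) :
  gsum N h (fun i j => k * f i j) = k * gsum N h f.
Proof.
rewrite /gsum mulrCA; congr (_ * _); rewrite mulr_sumr; apply: eq_bigr => i _.
by rewrite mulr_sumr.
Qed.

Lemma gsum_le (N : nat) (h t : R) (f g1 g2 : grid R) :
  (forall i j, f i j <= t * g1 i j + (1 - t) * g2 i j) ->
  gsum N h f <= t * gsum N h g1 + (1 - t) * gsum N h g2.
Proof.
move=> H; rewrite -!gsumZ -gsumD /gsum; apply: ler_wpM2l; first exact: sqr_ge0.
apply: ler_sum => i _; apply: ler_sum => j _; exact: H.
Qed.

Lemma gradsq_comb (h t : R) (phi psi : grid R) i j :
  gradsq h (fun i j => t * phi i j + (1 - t) * psi i j) i j =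
  ((t * Dx h phi i j + (1 - t) * Dx h psi i j) ^+ 2
   + (t * Dx h phi (i - 1) j + (1 - t) * Dx h psi (i - 1) j) ^+ 2) / 2
  + ((t * Dy h phi i j + (1 - t) * Dy h psi i j) ^+ 2
   + (t * Dy h phi i (j - 1) + (1 - t) * Dy h psi i (j - 1)) ^+ 2) / 2.
Proof. rewrite /gradsq /ax /ay /sq /Dx /Dy; ring. Qed.

Lemma sq_conv (t a b : R) : 0 <= t <= 1 -> (t * a + (1 - t) * b) ^+ 2 <= t * a ^+ 2 + (1 - t) * b ^+ 2.
Proof.
move=> /andP[t0 t1].
have h : 0 <= t * (1 - t) * (a - b) ^+ 2.
  by apply: mulr_ge0; [apply: mulr_ge0; lra | exact: sqr_ge0].
lra.
Qed.

Lemma K1point (x1 x2 t a1 a2 a3 a4 b1 b2 b3 b4 : R) :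
  0 < x1 < 1 -> 0 < x2 < 1 -> 0 <= t <= 1 ->
  (kappa (t * x1 + (1 - t) * x2) - 1 / 36) *
   (((t * a1 + (1 - t) * b1) ^+ 2 + (t * a2 + (1 - t) * b2) ^+ 2) / 2
   + ((t * a3 + (1 - t) * b3) ^+ 2 + (t * a4 + (1 - t) * b4) ^+ 2) / 2)
  <= t * ((kappa x1 - 1 / 36) * ((a1 ^+ 2 + a2 ^+ 2) / 2 + (a3 ^+ 2 + a4 ^+ 2) / 2))
   + (1 - t) * ((kappa x2 - 1 / 36) * ((b1 ^+ 2 + b2 ^+ 2) / 2 + (b3 ^+ 2 + b4 ^+ 2) / 2)).
Proof.
move=> h1 h2 ht.
have k1 := @keyG R _ _ _ a1 b1 h1 h2 ht.
have k2 := @keyG R _ _ _ a2 b2 h1 h2 ht.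
have k3 := @keyG R _ _ _ a3 b3 h1 h2 ht.
have k4 := @keyG R _ _ _ a4 b4 h1 h2 ht.
rewrite /GG in k1 k2 k3 k4.
lra.
Qed.

Lemma gs_point (t a1 a2 a3 a4 b1 b2 b3 b4 : R) : 0 <= t <= 1 ->
   (((t * a1 + (1 - t) * b1) ^+ 2 + (t * a2 + (1 - t) * b2) ^+ 2) / 2
   + ((t * a3 + (1 - t) * b3) ^+ 2 + (t * a4 + (1 - t) * b4) ^+ 2) / 2)
  <= t * ((a1 ^+ 2 + a2 ^+ 2) / 2 + (a3 ^+ 2 + a4 ^+ 2) / 2)
   + (1 - t) * ((b1 ^+ 2 + b2 ^+ 2) / 2 + (b3 ^+ 2 + b4 ^+ 2) / 2).
Proof.
move=> ht.
have k1 := sq_conv _ a1 b1 ht.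
have k2 := sq_conv _ a2 b2 ht.
have k3 := sq_conv _ a3 b3 ht.
have k4 := sq_conv _ a4 b4 ht.
lra.
Qed.

End Main.
Section Main2.
Variable R : realType.
Variables (N1 N2 : R).
Hypotheses (N10 : 0 < N1) (N20 : 0 < N2).

Lemma tau_gt0 : 0 < tau N1 N2.
Proof. rewrite /tau; apply: mulr_gt0 => //; rewrite sqrtr_gt0; apply: mulr_gt0 => //; exact: pi_gt0. Qed.

Lemma alpha_gt0 : 0 < alpha N1 N2.
Proof.
rewrite /alpha; apply: mulr_gt0; first exact: pi_gt0.
apply: exprn_gt0; apply: ltr_wpDl; [exact: sqrtr_ge0 | by rewrite divr_gt0].
Qed.

Lemma beta_gt0 : 0 < beta N1 N2.
Proof.
rewrite /beta; apply: divr_gt0; first exact: alpha_gt0.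
rewrite sqrtr_gt0; apply: mulr_gt0 => //; exact: pi_gt0.
Qed.

Lemma rho_gt1 : 1 < rho N1 N2.
Proof. rewrite /rho; have := divr_gt0 N20 tau_gt0; lra. Qed.

Lemma rho_inv {x : R} : 0 < x < 1 / rho N1 N2 -> 0 < x < 1 /\ 0 < 1 - rho N1 N2 * x.
Proof.
move=> /andP[x0 x1]; have r1 := rho_gt1.
have e : rho N1 N2 * (1 / rho N1 N2) = 1 by field; rewrite lt0r_neq0 //; lra.
have i1 : 1 / rho N1 N2 < 1 by rewrite ltr_pdivrMr; lra.
split; first (apply/andP; split; lra).
nra.
Qed.

Lemma S_eq p : Sfun N1 N2 p = xl (1 / tau N1 N2) (alpha N1 N2 / tau N1 N2) p
  + xl (1 / N1) (beta N1 N2 / tau N1 N2) p + xl 1 1 (1 - rho N1 N2 * p).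
Proof.
rewrite /Sfun /xl !mul1r; congr (_ + _ + _); congr (_ * ln _); ring.
Qed.

Lemma S_conv a b t : 0 < a < 1 / rho N1 N2 -> 0 < b < 1 / rho N1 N2 -> 0 <= t <= 1 ->
  Sfun N1 N2 (t * a + (1 - t) * b) <= t * Sfun N1 N2 a + (1 - t) * Sfun N1 N2 b.
Proof.
move=> ha hb ht.
have [/andP[a0 _] a1] := rho_inv ha.
have [/andP[b0 _] b1] := rho_inv hb.
have T := tau_gt0.
rewrite !S_eq.
have -> : 1 - rho N1 N2 * (t * a + (1 - t) * b) = t * (1 - rho N1 N2 * a) + (1 - t) * (1 - rho N1 N2 * b) by ring.
have c1 := @xl_convex R (1 / tau N1 N2) (alpha N1 N2 / tau N1 N2) a b t.
have c2 := @xl_convex R (1 / N1) (beta N1 N2 / tau N1 N2) a b t.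
have c3 := @xl_convex R 1 1 _ _ t ler01 ltr01 a1 b1 ht.
have d1 : 0 <= 1 / tau N1 N2 by rewrite divr_ge0 // ltW.
have d2 : 0 <= 1 / N1 by rewrite divr_ge0 // ltW.
have e1 : 0 < alpha N1 N2 / tau N1 N2 by rewrite divr_gt0 // alpha_gt0.
have e2 : 0 < beta N1 N2 / tau N1 N2 by rewrite divr_gt0 // beta_gt0.
have := c1 d1 e1 a0 b0 ht; have := c2 d2 e2 a0 b0 ht.
lra.
Qed.

Lemma H_conv chi a b t : 0 < chi -> 0 <= t <= 1 ->
  - Hfun N1 N2 chi (t * a + (1 - t) * b) <= t * (- Hfun N1 N2 chi a) + (1 - t) * (- Hfun N1 N2 chi b).
Proof.
move=> c0 /andP[t0 t1]; have r1 := rho_gt1.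
have h : 0 <= chi * rho N1 N2 * (t * (1 - t)) * (a - b) ^+ 2.
  apply: mulr_ge0; last exact: sqr_ge0.
  apply: mulr_ge0; first (apply: mulr_ge0; lra).
  apply: mulr_ge0; lra.
rewrite /Hfun; lra.
Qed.

End Main2.

Lemma gsumN (R : realType) (N : nat) (h : R) (f : grid R) :
  gsum N h (fun i j => - f i j) = - gsum N h f.
Proof. rewrite -mulN1r -gsumZ; apply: gsum_ext => i j; by rewrite mulN1r. Qed.

Theorem lemma3p2 (R : realType) (L : R) (N : nat) (N1 N2 chi : R) :
  0 < L -> (0 < N)%N -> 0 < N1 -> 0 < N2 -> 0 < chi ->
  let h := L / N%:R in
  (forall phi : grid R, admissible N1 N2 N phi ->
     Fen N1 N2 chi N h phi = Fc N1 N2 N h phi - Fe N1 N2 chi N h phi /\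
     Fc N1 N2 N h phi - Fe N1 N2 chi N h phi
       = FS N1 N2 N h phi + FK1 N h phi + FK2 N h phi - FH N1 N2 chi N h phi) /\
  convex_on (admissible N1 N2 N) (Fc N1 N2 N h) /\
  convex_on (admissible N1 N2 N) (Fe N1 N2 chi N h) /\
  convex_on (admissible N1 N2 N) (FS N1 N2 N h) /\
  convex_on (admissible N1 N2 N) (FK1 N h) /\
  convex_on (admissible N1 N2 N) (FK2 N h) /\
  convex_on (admissible N1 N2 N) (FH N1 N2 chi N h).
Proof.
move=> L0 N0 N10 N20 chi0 h.
have cS : convex_on (admissible N1 N2 N) (FS N1 N2 N h).
  move=> phi psi t [_ Hp] [_ Hq] ht; rewrite /FS; apply: gsum_le => i j.
  by apply: S_conv => //.
have cK1 : convex_on (admissible N1 N2 N) (FK1 N h).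
  move=> phi psi t [_ Hp] [_ Hq] ht; rewrite /FK1; apply: gsum_le => i j.
  rewrite gradsq_comb /gradsq /ax /ay /sq.
  have [p1 _] := @rho_inv R N1 N2 N10 N20 _ (Hp i j).
  have [q1 _] := @rho_inv R N1 N2 N10 N20 _ (Hq i j).
  exact: K1point.
have cK2 : convex_on (admissible N1 N2 N) (FK2 N h).
  move=> phi psi t _ _ ht; rewrite /FK2 /gradnorm2.
  have X : gsum N h (gradsq h (fun i j => t * phi i j + (1 - t) * psi i j))
     <= t * gsum N h (gradsq h phi) + (1 - t) * gsum N h (gradsq h psi).
    apply: gsum_le => i j; rewrite gradsq_comb /gradsq /ax /ay /sq.
    exact: gs_point.
  lra.
have cH : convex_on (admissible N1 N2 N) (Fe N1 N2 chi N h).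
  move=> phi psi t _ _ ht; rewrite /Fe -!gsumN; apply: gsum_le => i j.
  by apply: H_conv.
split.
  move=> phi _; split; last by [].
  rewrite /Fen 2!gsumD.
  have E : gsum N h (fun i j => kappa (phi i j) * gradsq h phi i j) = FK1 N h phi + FK2 N h phi.
    rewrite /FK1 /FK2 /gradnorm2 -gsumZ -gsumD; apply: gsum_ext => i j; ring.
  rewrite E /Fc /FS /Fe; ring.
split.
  move=> phi psi t Hp Hq ht; rewrite /Fc.
  have := cS phi psi t Hp Hq ht; have := cK1 phi psi t Hp Hq ht; have := cK2 phi psi t Hp Hq ht.
  lra.
do 4 (split => //).
Qed.
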